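(* In the setting described in the context, $\varphi(B^1_k)=B^2_k$ for every $k\in\mathbb{N}$.
   Context: $\mathbb{D}^2$ is the open unit disk with the Poincaré metric $d$. For $j=1,2$, $\Gamma_j$ is a cocompact torsion-free Fuchsian group, $M_j=\mathbb{D}^2/\Gamma_j$ with quotient map $\pi_j$, and $M_1,M_2$ are homeomorphic. $\Lambda_j=\{\gamma(0):\gamma\in\Gamma_j\}$. Identifying $T_{\pi_j(0)}M_j$ with $\mathbb{D}^2$ via the exponential map (so $v\leftrightarrow z$ with $|v|=d(0,z)$, $\exp(v)=\pi_j(z)$), the focal decomposition is $\sigma^j_i=\{z : \#\{\lambda\in\Lambda_j : d(\lambda,z)=d(0,z)\}=i\}$, and the Brillouin sets are $B^j_k=\{z : \#\{\lambda\in\Lambda_j : d(\lambda,z)\le d(0,z)\}=k\}$ (equivalently, the set of $z$ with exactly $k$ points $z'$ of $\pi_j^{-1}(\pi_j(z))$ satisfying $d(0,z')\le d(0,z)$). $\varphi:\mathbb{D}^2\to\mathbb{D}^2$ is a homeomorphism with $\varphi(0)=0$ and $\varphi(\sigma^1_i)=\sigma^2_i$ for every $i\ge1$. *)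

(* Defs.v *)
From Stdlib Require Import Reals List.
From Coquelicot Require Import Coquelicot.
Open Scope R_scope.

Definition disk (z : C) : Prop := Cmod z < 1.

(** Poincare (hyperbolic) distance on the unit disk:
    d(z,w) = arcosh (1 + 2|z-w|^2 / ((1-|z|^2)(1-|w|^2))),
    with arcosh x = ln (x + sqrt (x^2 - 1)). *)
Definition hdist (z w : C) : R :=
  let x := 1 + 2 * (Cmod (Cminus z w)) ^ 2
                 / ((1 - (Cmod z) ^ 2) * (1 - (Cmod w) ^ 2)) in
  ln (x + sqrt (x * x - 1)).

Definition agree_on_disk (f g : C -> C) : Prop :=
  forall z, disk z -> f z = g z.

(** [(a,b)] represents the orientation preserving isometry
    z |-> (a z + b)/(conj b z + conj a), |a|^2 - |b|^2 = 1  (an element of SU(1,1)). *)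
Definition represents (a b : C) (g : C -> C) : Prop :=
  (Cmod a) ^ 2 - (Cmod b) ^ 2 = 1 /\
  forall z, disk z ->
    g z = Cdiv (Cplus (Cmult a z) b) (Cplus (Cmult (Cconj b) z) (Cconj a)).

Definition disk_aut (g : C -> C) : Prop := exists a b, represents a b g.

Definition aut_subgroup (G : (C -> C) -> Prop) : Prop :=
  (forall g, G g -> disk_aut g) /\
  (exists e, G e /\ agree_on_disk e (fun z => z)) /\
  (forall g h, G g -> G h -> exists k, G k /\ agree_on_disk k (fun z => g (h z))) /\
  (forall g, G g -> exists h, G h /\ agree_on_disk (fun z => h (g z)) (fun z => z)
                              /\ agree_on_disk (fun z => g (h z)) (fun z => z)).

(** Discreteness in PSU(1,1): the identity is isolated, i.e. some neighbourhood
    of the identity matrix in SU(1,1) contains (representatives of) no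
    nontrivial element of G. *)
Definition discrete_group (G : (C -> C) -> Prop) : Prop :=
  exists eps, 0 < eps /\
    forall g a b, G g -> represents a b g ->
      Cmod (Cminus a (RtoC 1)) < eps -> Cmod b < eps ->
      agree_on_disk g (fun z => z).

Definition fuchsian (G : (C -> C) -> Prop) : Prop :=
  aut_subgroup G /\ discrete_group G.

Definition torsion_free (G : (C -> C) -> Prop) : Prop :=
  forall g (n : nat), G g -> (1 <= n)%nat ->
    agree_on_disk (fun z => Nat.iter n g z) (fun z => z) ->
    agree_on_disk g (fun z => z).

Definition orb (G : (C -> C) -> Prop) (z w : C) : Prop :=
  exists g, G g /\ w = g z.

Definition invariant (G : (C -> C) -> Prop) (V : C -> Prop) : Prop :=
  forall z w, disk z -> orb G z w -> V z -> V w.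

(** Open subset of the disk (Euclidean topology = hyperbolic topology). *)
Definition open_in_disk (V : C -> Prop) : Prop :=
  forall z, V z -> disk z /\
    exists r, 0 < r /\ forall w, disk w -> Cmod (Cminus w z) < r -> V w.

(** Open sets of the quotient D/G correspond (via preimage under pi) exactly to
    G-invariant open subsets of D. Cocompactness = compactness of D/G,
    unfolded: every cover of D by G-invariant open sets has a finite subcover. *)
Definition cocompact (G : (C -> C) -> Prop) : Prop :=
  forall (I : Type) (U : I -> C -> Prop),
    (forall i, open_in_disk (U i) /\ invariant G (U i)) ->
    (forall z, disk z -> exists i, U i z) ->
    exists l : list I, forall z, disk z -> exists i, In i l /\ U i z.

Definition cocompact_torsion_free_fuchsian (G : (C -> C) -> Prop) : Prop :=
  fuchsian G /\ torsion_free G /\ cocompact G.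

(** [g] is a lift of a continuous map D/G1 -> D/G2. Every map D/G1 -> D/G2
    has such a lift; continuity w.r.t. the quotient topologies is exactly
    the condition that preimages of G2-invariant open sets are open. *)
Definition quot_cont_lift (G1 G2 : (C -> C) -> Prop) (g : C -> C) : Prop :=
  (forall z, disk z -> disk (g z)) /\
  (forall z w, disk z -> orb G1 z w -> orb G2 (g z) (g w)) /\
  (forall V, open_in_disk V -> invariant G2 V ->
     open_in_disk (fun z => disk z /\ V (g z))).

Definition quotients_homeomorphic (G1 G2 : (C -> C) -> Prop) : Prop :=
  exists g h,
    quot_cont_lift G1 G2 g /\ quot_cont_lift G2 G1 h /\
    (forall z, disk z -> orb G1 (h (g z)) z) /\
    (forall w, disk w -> orb G2 (g (h w)) w).

Definition Lambda (G : (C -> C) -> Prop) (x : C) : Prop :=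
  exists g, G g /\ x = g (RtoC 0).

Definition card_is (P : C -> Prop) (k : nat) : Prop :=
  exists l : list C, NoDup l /\ length l = k /\ forall x, In x l <-> P x.

Definition focal (G : (C -> C) -> Prop) (i : nat) (z : C) : Prop :=
  disk z /\ card_is (fun x => Lambda G x /\ hdist x z = hdist (RtoC 0) z) i.

Definition brillouin (G : (C -> C) -> Prop) (k : nat) (z : C) : Prop :=
  disk z /\ card_is (fun x => Lambda G x /\ hdist x z <= hdist (RtoC 0) z) k.

Definition cont_on_disk (f : C -> C) : Prop :=
  forall z, disk z -> forall eps, 0 < eps -> exists del, 0 < del /\
    forall w, disk w -> Cmod (Cminus w z) < del -> Cmod (Cminus (f w) (f z)) < eps.

Definition disk_homeo (f : C -> C) : Prop :=
  (forall z, disk z -> disk (f z)) /\ cont_on_disk f /\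
  exists g, (forall z, disk z -> disk (g z)) /\ cont_on_disk g /\
    (forall z, disk z -> g (f z) = z) /\ (forall z, disk z -> f (g z) = z).

Definition image_eq (f : C -> C) (A B : C -> Prop) : Prop :=
  forall w, B w <-> exists z, A z /\ f z = w.

(* Main.v *)
Require Import Defs.
From Stdlib Require Import Reals List Lra Psatz Classical ClassicalEpsilon.
From Stdlib Require Import FunctionalExtensionality.
From Coquelicot Require Import Coquelicot.
Open Scope R_scope.

Lemma inj_list : forall (lT : list C) (S : C -> Prop) (f : C -> C),
  (forall x, S x -> In (f x) lT) ->
  (forall x y, S x -> S y -> f x = f y -> x = y) ->
  exists l, NoDup l /\ (length l <= length lT)%nat /\ (forall x, In x l <-> S x).
Proof.
  induction lT as [|y lT IH]; intros S f Hin Hinj.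
  - exists nil. split; [constructor|split; [simpl; lia|]].
    intros x; split; [intros []|intros Hx; exact (Hin x Hx)].
  - destruct (classic (exists x0, S x0 /\ f x0 = y)) as [[x0 [Hx0 Hfx0]]|Hno].
    + destruct (IH (fun x => S x /\ x <> x0) f) as [l [Hnd [Hlen Hl]]].
      * intros x [Hx Hne]. destruct (Hin x Hx) as [E|E]; auto.
        exfalso. apply Hne. apply Hinj; auto. congruence.
      * intros x y' [Hx _] [Hy _]. apply Hinj; auto.
      * exists (x0 :: l). split; [|split].
        -- constructor; auto. intros Hi. apply Hl in Hi. tauto.
        -- simpl. lia.
        -- intros x. simpl. split.
           ++ intros [E|E]; [subst; auto| apply Hl in E; tauto].
           ++ intros Hx. destruct (classic (x = x0)) as [E|E]; [left; auto|right; apply Hl; auto].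
    + destruct (IH S f) as [l [Hnd [Hlen Hl]]]; auto.
      * intros x Hx. destruct (Hin x Hx) as [E|E]; auto. exfalso; apply Hno; eauto.
      * exists l. repeat split; auto. simpl; lia. apply Hl. apply Hl.
Qed.

Lemma inj_card : forall (S T : C -> Prop) (f : C -> C) k,
  card_is T k -> (forall x, S x -> T (f x)) ->
  (forall x y, S x -> S y -> f x = f y -> x = y) ->
  exists n, (n <= k)%nat /\ card_is S n.
Proof.
  intros S T f k [lT [Hnd [Hlen HT]]] Hm Hinj.
  destruct (inj_list lT S f) as [l [H1 [H2 H3]]]; auto.
  - intros x Hx. apply HT. auto.
  - exists (length l). split. lia. exists l. auto.
Qed.

Lemma card_unique : forall S n m, card_is S n -> card_is S m -> n = m.
Proof.
  intros S n m [l1 [N1 [L1 H1]]] [l2 [N2 [L2 H2]]].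
  assert (A := NoDup_incl_length N1 (fun x H => proj2 (H2 x) (proj1 (H1 x) H))).
  assert (B := NoDup_incl_length N2 (fun x H => proj2 (H1 x) (proj1 (H2 x) H))).
  lia.
Qed.

Lemma card_remove : forall P n a, card_is P n -> P a ->
  card_is (fun x => P x /\ x <> a) (n - 1).
Proof.
  intros P n a [l [Hnd [Hlen Hl]]] Ha.
  apply Hl in Ha. destruct (in_split a l Ha) as [l1 [l2 E]]. subst l.
  exists (l1 ++ l2). split; [|split].
  - eapply NoDup_remove_1; eauto.
  - rewrite length_app in *. simpl in Hlen. lia.
  - intros x. pose proof (NoDup_remove_2 _ _ _ Hnd) as Hna. split.
    + intros Hx. split.
      * apply Hl. apply in_app_iff in Hx. apply in_app_iff. simpl. tauto.
      * intros E; subst; auto.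
    + intros [Hx Hne]. apply Hl in Hx. apply in_app_iff in Hx. apply in_app_iff.
      simpl in Hx. destruct Hx as [H|[H|H]]; auto. congruence.
Qed.

Lemma inj_exists : forall (lA lB : list C), NoDup lB -> (length lA <= length lB)%nat ->
  exists g : C -> C, (forall x, In x lA -> In (g x) lB) /\
    (forall x y, In x lA -> In y lA -> g x = g y -> x = y).
Proof.
  induction lA as [|a lA IH]; intros lB Hnd Hlen.
  - exists (fun x => x). split; intros; simpl in *; tauto.
  - destruct lB as [|b lB]; simpl in Hlen; [lia|].
    inversion Hnd; subst.
    destruct (IH lB) as [g [Hg1 Hg2]]; auto. lia.
    exists (fun x => if excluded_middle_informative (x = a) then b else g x).
    split.
    + intros x Hx. destruct (excluded_middle_informative (x = a)); simpl; auto.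
      right. apply Hg1. destruct Hx; auto. congruence.
    + intros x y Hx Hy.
      destruct (excluded_middle_informative (x = a)) as [Ex|Ex];
      destruct (excluded_middle_informative (y = a)) as [Ey|Ey]; intros E.
      * congruence.
      * exfalso. assert (In y lA) by (destruct Hy; auto; congruence).
        apply H1. rewrite E. auto.
      * exfalso. assert (In x lA) by (destruct Hx; auto; congruence).
        apply H1. rewrite <- E. auto.
      * apply Hg2; auto. destruct Hx; auto; congruence. destruct Hy; auto; congruence.
Qed.

Definition sq (z : C) : R := fst z ^ 2 + snd z ^ 2.
Definition qf (l p : C) : R :=
  (fst l - fst p) ^ 2 + (snd l - snd p) ^ 2 - (1 - sq l) * sq p.
Definition Xf (z w : C) : R :=
  1 + 2 * (Cmod (Cminus z w)) ^ 2 / ((1 - (Cmod z) ^ 2) * (1 - (Cmod w) ^ 2)).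
Definition Ac (x : R) : R := ln (x + sqrt (x * x - 1)).

Lemma hdist_eq z w : hdist z w = Ac (Xf z w).
Proof. reflexivity. Qed.

Lemma Cmod_sq z : Cmod z ^ 2 = sq z.
Proof. unfold Cmod, sq. rewrite pow2_sqrt; auto. nra. Qed.

Lemma sq_ge0 z : 0 <= sq z.
Proof. unfold sq; nra. Qed.

Lemma disk_sq z : disk z <-> sq z < 1.
Proof.
  unfold disk. rewrite <- Cmod_sq. pose proof (Cmod_ge_0 z). split; intros; nra.
Qed.

Lemma Ac_lt x y : 1 <= x -> x < y -> Ac x < Ac y.
Proof.
  intros H1 H2. unfold Ac. apply ln_increasing.
  - pose proof (sqrt_pos (x*x-1)). lra.
  - assert (sqrt (x*x-1) <= sqrt (y*y-1)) by (apply sqrt_le_1_alt; nra). lra.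
Qed.

Lemma Ac_le_iff x y : 1 <= x -> 1 <= y -> (Ac x <= Ac y <-> x <= y).
Proof.
  intros Hx Hy. split; intros H.
  - destruct (Rle_lt_dec x y); auto. pose proof (Ac_lt y x). lra.
  - destruct H as [H|H]. left; apply Ac_lt; auto. subst; lra.
Qed.

Lemma Ac_eq_iff x y : 1 <= x -> 1 <= y -> (Ac x = Ac y <-> x = y).
Proof.
  intros Hx Hy. split; intros H; [|subst; auto].
  destruct (Rtotal_order x y) as [h|[h|h]]; auto.
  pose proof (Ac_lt x y). lra. pose proof (Ac_lt y x). lra.
Qed.

Lemma Xf_comp z w : disk z -> disk w ->
  Xf z w = 1 + 2 * ((fst z - fst w) ^ 2 + (snd z - snd w) ^ 2) / ((1 - sq z) * (1 - sq w)).
Proof.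
  intros. unfold Xf. rewrite !Cmod_sq. unfold sq at 1. simpl. try (do 3 f_equal; ring).
Qed.

Lemma Xf_ge1 z w : disk z -> disk w -> 1 <= Xf z w.
Proof.
  intros Hz Hw. rewrite Xf_comp; auto. apply disk_sq in Hz. apply disk_sq in Hw.
  assert (0 <= 2 * ((fst z - fst w) ^ 2 + (snd z - snd w) ^ 2) / ((1 - sq z) * (1 - sq w))).
  { apply Rmult_le_pos. apply Rmult_le_pos; [lra|]; apply Rplus_le_le_0_compat; apply pow2_ge_0. left. apply Rinv_0_lt_compat. nra. }
  lra.
Qed.

Lemma disk0 : disk (RtoC 0).
Proof. apply disk_sq. unfold sq; simpl. lra. Qed.

Lemma Xdiff l p : disk l -> disk p ->
  Xf l p - Xf (RtoC 0) p = 2 * qf l p / ((1 - sq l) * (1 - sq p)).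
Proof.
  intros Hl Hp. rewrite !Xf_comp; auto using disk0.
  apply disk_sq in Hl. apply disk_sq in Hp.
  unfold qf, sq in *. simpl. field. split; lra.
Qed.

Lemma hd_le l p : disk l -> disk p ->
  (hdist l p <= hdist (RtoC 0) p <-> qf l p <= 0).
Proof.
  intros Hl Hp. rewrite !hdist_eq. rewrite Ac_le_iff; auto using Xf_ge1, disk0.
  pose proof (Xdiff l p Hl Hp).
  apply disk_sq in Hl. apply disk_sq in Hp.
  assert (Hd : 0 < (1 - sq l) * (1 - sq p)) by nra.
  set (d := (1 - sq l) * (1 - sq p)) in *.
  assert (Xf l p - Xf (RtoC 0) p = 2 * qf l p * / d) by (rewrite H; unfold Rdiv; auto).
  pose proof (Rinv_0_lt_compat d Hd).
  split; intros.
  - destruct (Rle_lt_dec (qf l p) 0); auto. nra.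
  - nra.
Qed.

Lemma hd_eq l p : disk l -> disk p ->
  (hdist l p = hdist (RtoC 0) p <-> qf l p = 0).
Proof.
  intros Hl Hp. rewrite !hdist_eq. rewrite Ac_eq_iff; auto using Xf_ge1, disk0.
  pose proof (Xdiff l p Hl Hp).
  apply disk_sq in Hl. apply disk_sq in Hp.
  assert (Hd : 0 < (1 - sq l) * (1 - sq p)) by nra.
  set (d := (1 - sq l) * (1 - sq p)) in *.
  assert (Xf l p - Xf (RtoC 0) p = 2 * qf l p * / d) by (rewrite H; unfold Rdiv; auto).
  pose proof (Rinv_0_lt_compat d Hd).
  split; intros.
  - assert (HZ: 2 * qf l p * / d = 0) by lra.
    apply Rmult_integral in HZ. destruct HZ as [HZ|HZ]; [lra|]. lra.
  - match goal with HQ : qf l p = 0 |- _ => rewrite HQ in * end. lra.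
Qed.

Definition ray (z : C) (s : R) : C := (s * fst z, s * snd z).

Lemma ray_disk z s : disk z -> 0 <= s <= 1 -> disk (ray z s).
Proof.
  intros Hz Hs. apply disk_sq in Hz. apply disk_sq. unfold sq in *; simpl.
  pose proof (sq_ge0 z). unfold sq in H.
  assert (s^2 <= 1) by nra. nra.
Qed.

Lemma ray1 z : ray z 1 = z.
Proof. destruct z; unfold ray; simpl; f_equal; ring. Qed.

Lemma ray0 z : ray z 0 = RtoC 0.
Proof. unfold ray, RtoC; f_equal; ring. Qed.

Lemma far_side l z s : disk l -> disk z -> 0 < sq l -> 0 <= s <= 1 ->
  qf l (ray z s) = 0 -> qf l z <= 0.
Proof.
  intros Hl Hz HL Hs Hq. apply disk_sq in Hl. apply disk_sq in Hz.
  destruct z as [x y]; destruct l as [a b]. unfold qf, sq, ray in *; cbn [fst snd] in *.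
  set (L := a^2 + b^2) in *. set (Z := x^2+y^2) in *.
  assert (E : s * ((a - x) ^ 2 + (b - y) ^ 2 - (1 - L) * Z)
     - ((a - s * x) ^ 2 + (b - s * y) ^ 2 - (1 - L) * ((s * x) ^ 2 + (s * y) ^ 2))
     = L * (s - 1) * (1 - s * Z)) by (unfold L, Z; ring).
  rewrite Hq in E.
  assert (s <> 0).
  { intros ->. unfold L in *. rewrite Rmult_0_l, !Rminus_0_r in Hq.
    assert (HH: (a ^ 2 + b ^ 2 - (1 - (a ^ 2 + b ^ 2)) * ((0 * x) ^ 2 + (0 * y) ^ 2)) = a^2+b^2) by ring.
    lra. }
  assert (0 <= Z) by (unfold Z; pose proof (pow2_ge_0 x); pose proof (pow2_ge_0 y); lra).
  assert (L * (s - 1) * (1 - s * Z) <= 0).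
  { assert (0 <= 1 - s*Z) by nra. assert (s - 1 <= 0) by lra.
    assert (0 <= L*(1-s*Z)) by (apply Rmult_le_pos; lra).
    replace (L * (s - 1) * (1 - s * Z)) with (- ((L*(1-s*Z)) * (1 - s))) by ring.
    assert (0 <= (L*(1-s*Z)) * (1 - s)) by (apply Rmult_le_pos; lra). lra. }
  assert (0 < s) by lra.
  set (q1 := (a - x) ^ 2 + (b - y) ^ 2 - (1 - L) * Z) in *.
  destruct (Rle_lt_dec q1 0); auto.
  assert (0 < s * q1) by (apply Rmult_lt_0_compat; lra). lra.
Qed.

Lemma ray_unique l z s1 s2 : disk l -> disk z -> 0 < sq l -> 0 <= s1 <= 1 -> 0 <= s2 <= 1 ->
  qf l (ray z s1) = 0 -> qf l (ray z s2) = 0 -> s1 = s2.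
Proof.
  intros Hl Hz HL H1 H2 Q1 Q2. apply disk_sq in Hl. apply disk_sq in Hz.
  destruct z as [x y]; destruct l as [a b]. unfold qf, sq, ray in *; cbn [fst snd] in *.
  set (L := a^2 + b^2) in *. set (Z := x^2+y^2) in *. set (c := a*x+b*y).
  assert (F1 : L - 2*c*s1 + s1^2*Z*L = 0) by (rewrite <- Q1; unfold L, Z, c; ring).
  assert (F2 : L - 2*c*s2 + s2^2*Z*L = 0) by (rewrite <- Q2; unfold L, Z, c; ring).
  destruct (Req_dec s1 s2) as [|Hne]; auto. exfalso.
  assert (E: (s1 - s2) * (-2*c + (s1+s2)*Z*L) = 0) by (rewrite <- (Rminus_diag_eq _ _ (eq_trans F1 (eq_sym F2))); ring).
  apply Rmult_integral in E. destruct E as [E|E]; [lra|].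
  assert (E2: L - 2*c*s1 + s1^2*Z*L = L*(1 - s1*s2*Z) + s1*(-2*c + (s1+s2)*Z*L)) by ring.
  rewrite E, Rmult_0_r, Rplus_0_r in E2.
  assert (0 <= Z) by (unfold Z; pose proof (pow2_ge_0 x); pose proof (pow2_ge_0 y); lra).
  assert (s1*s2 <= 1) by nra.
  assert (0 < 1 - s1*s2*Z) by nra. nra.
Qed.

Lemma Lambda0 G : aut_subgroup G -> Lambda G (RtoC 0).
Proof.
  intros [_ [[e [He Hid]] _]]. exists e. split; auto. rewrite Hid; auto using disk0.
Qed.

Lemma Lambda_disk G x : aut_subgroup G -> Lambda G x -> disk x.
Proof.
  intros [Haut _] [g [Hg ->]]. destruct (Haut g Hg) as [a [b [Hab Hrep]]].
  rewrite Hrep by apply disk0. rewrite !Cmult_0_r, !Cplus_0_l.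
  unfold disk.
  assert (Ha : 0 < Cmod a). { pose proof (Cmod_ge_0 b). pose proof (Cmod_ge_0 a). nra. }
  assert (Hc : Cconj a <> RtoC 0). { apply Cmod_gt_0. rewrite Cmod_conj; auto. }
  rewrite Cmod_div by auto. rewrite Cmod_conj.
  apply Rmult_lt_reg_r with (Cmod a); auto. unfold Rdiv.
  rewrite Rmult_assoc, Rinv_l by lra. rewrite Rmult_1_r, Rmult_1_l.
  pose proof (Cmod_ge_0 b). nra.
Qed.

Lemma fst_le_Cmod w : Rabs (fst w) <= Cmod w.
Proof.
  pose proof (Cmod_sq w). unfold sq in H. pose proof (Cmod_ge_0 w).
  pose proof (Rabs_pos (fst w)). pose proof (pow2_abs (fst w)).
  pose proof (pow2_ge_0 (snd w)). nra.
Qed.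

Lemma snd_le_Cmod w : Rabs (snd w) <= Cmod w.
Proof.
  pose proof (Cmod_sq w). unfold sq in H. pose proof (Cmod_ge_0 w).
  pose proof (Rabs_pos (snd w)). pose proof (pow2_abs (snd w)).
  pose proof (pow2_ge_0 (fst w)). nra.
Qed.

Definition clamp (t : R) : R := Rmax 0 (Rmin 1 t).

Lemma clamp_range t : 0 <= clamp t <= 1.
Proof. unfold clamp, Rmax, Rmin. repeat destruct Rle_dec; lra. Qed.

Lemma clamp_lip t s : Rabs (clamp t - clamp s) <= Rabs (t - s).
Proof. unfold clamp, Rmax, Rmin. repeat destruct Rle_dec; split_Rabs; lra. Qed.

Lemma clamp_id t : 0 <= t <= 1 -> clamp t = t.
Proof. intros. unfold clamp, Rmax, Rmin. repeat destruct Rle_dec; lra. Qed.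

Lemma ray_close z s t : disk z -> Cmod (Cminus (ray z s) (ray z t)) <= Rabs (s - t).
Proof.
  intros Hz. apply disk_sq in Hz.
  assert (E : Cmod (Cminus (ray z s) (ray z t)) ^ 2 = (s - t)^2 * sq z).
  { rewrite Cmod_sq. unfold sq, ray. cbn [fst snd Cminus Cplus Copp]. ring. }
  pose proof (Cmod_ge_0 (Cminus (ray z s) (ray z t))). pose proof (sq_ge0 z).
  pose proof (Rabs_pos (s - t)). rewrite <- (pow2_abs (s - t)) in E. nra.
Qed.

Section Cont.
Variable f : C -> C.
Hypothesis fdisk : forall z, disk z -> disk (f z).
Hypothesis fcont : cont_on_disk f.
Variable z : C.
Hypothesis Hz : disk z.

Lemma comp_cont (pr : C -> R) : (forall w, Rabs (pr w) <= Cmod w) ->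
  (forall a b, pr (Cminus a b) = pr a - pr b) ->
  forall t0, continuity_pt (fun t => pr (f (ray z (clamp t)))) t0.
Proof.
  intros Hpr Hlin t0. unfold continuity_pt, continue_in, limit1_in, limit_in.
  intros eps Heps. cbn [dist R_met]. unfold R_dist.
  destruct (fcont (ray z (clamp t0)) (ray_disk z _ Hz (clamp_range t0)) eps Heps)
    as [del [Hdel Hd]].
  exists del. split; auto. intros t [_ Ht].
  rewrite <- Hlin. eapply Rle_lt_trans; [apply Hpr|].
  apply Hd. apply ray_disk; auto using clamp_range.
  eapply Rle_lt_trans; [apply ray_close; auto|].
  eapply Rle_lt_trans; [apply clamp_lip|]. auto.
Qed.

Lemma h_cont (mu : C) : continuity (fun t => qf mu (f (ray z (clamp t)))).
Proof.
  intros t0.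
  pose proof (comp_cont fst fst_le_Cmod (fun a b => eq_refl) t0) as C1.
  pose proof (comp_cont snd snd_le_Cmod (fun a b => eq_refl) t0) as C2.
  set (U1 := fun t => fst (f (ray z (clamp t)))) in *.
  set (U2 := fun t => snd (f (ray z (clamp t)))) in *.
  assert (Cc : forall c, continuity_pt (fun _ => c) t0).
  { intros c. apply continuity_pt_const. intros x y; reflexivity. }
  unfold qf, sq.
  change (continuity_pt (fun t => (fst mu - U1 t) ^ 2 + (snd mu - U2 t) ^ 2
      - (1 - (fst mu ^ 2 + snd mu ^ 2)) * (U1 t ^ 2 + U2 t ^ 2)) t0).
  assert (Csq : forall U, continuity_pt U t0 -> continuity_pt (fun t => U t ^ 2) t0).
  { intros U HU. assert (E : (fun t => U t ^ 2) = (U * U)%F).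
    { apply functional_extensionality. intros t. unfold mult_fct. ring. }
    rewrite E. apply continuity_pt_mult; auto. }
  apply (continuity_pt_minus (fun t => (fst mu - U1 t) ^ 2 + (snd mu - U2 t) ^ 2)
    (fun t => (1 - (fst mu ^ 2 + snd mu ^ 2)) * (U1 t ^ 2 + U2 t ^ 2))).
  - apply (continuity_pt_plus (fun t => (fst mu - U1 t) ^ 2) (fun t => (snd mu - U2 t) ^ 2)).
    + apply (Csq (fun t => fst mu - U1 t)).
      apply (continuity_pt_minus (fun _ => fst mu) U1); auto.
    + apply (Csq (fun t => snd mu - U2 t)).
      apply (continuity_pt_minus (fun _ => snd mu) U2); auto.
  - apply (continuity_pt_mult (fun _ => 1 - (fst mu ^ 2 + snd mu ^ 2)) (fun t => U1 t ^ 2 + U2 t ^ 2)); auto.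
    apply (continuity_pt_plus (fun t => U1 t ^ 2) (fun t => U2 t ^ 2)); auto.
Qed.

Lemma path_hit (mu : C) : qf mu (f (ray z 0)) * qf mu (f (ray z 1)) <= 0 ->
  exists s, 0 <= s <= 1 /\ qf mu (f (ray z s)) = 0.
Proof.
  intros H.
  destruct (IVT_cor _ 0 1 (h_cont mu)) as [s [Hs Hq]].
  - lra.
  - rewrite !clamp_id by lra. auto.
  - exists s. split; auto. rewrite clamp_id in Hq; auto.
Qed.
End Cont.

Definition Qs G p := fun x => Lambda G x /\ hdist x p = hdist (RtoC 0) p.
Definition Es G p := fun x => Lambda G x /\ hdist x p <= hdist (RtoC 0) p.

Lemma sq0 x : sq x = 0 -> x = RtoC 0.
Proof.
  destruct x as [a b]. unfold sq; cbn [fst snd]. intros H.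
  pose proof (pow2_ge_0 a). pose proof (pow2_ge_0 b).
  assert (a ^ 2 = 0) by lra. assert (b ^ 2 = 0) by lra.
  assert (a = 0) by nra. assert (b = 0) by nra. subst. reflexivity.
Qed.

Lemma sq_pos x : x <> RtoC 0 -> 0 < sq x.
Proof.
  intros H. destruct (sq_ge0 x) as [h|h]; auto. exfalso; apply H, sq0; auto.
Qed.

Lemma choiceT (A B : Type) (P : A -> B -> Prop) : (forall a, exists b, P a b) ->
  exists g : A -> B, forall a, P a (g a).
Proof.
  intros H. exists (fun a => proj1_sig (constructive_indefinite_description _ (H a))).
  intros a. apply proj2_sig.
Qed.

Lemma card0 P a : card_is P 0 -> P a -> False.
Proof.
  intros [l [_ [Hl H]]] Ha. destruct l; [|simpl in Hl; lia]. apply H in Ha. destruct Ha.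
Qed.

Lemma main_lemma (Ga Gb : (C -> C) -> Prop) (f : C -> C) :
  aut_subgroup Ga -> aut_subgroup Gb ->
  (forall z, disk z -> disk (f z)) -> cont_on_disk f -> f (RtoC 0) = RtoC 0 ->
  (forall i x, (1 <= i)%nat -> focal Ga i x -> focal Gb i (f x)) ->
  forall k z, brillouin Ga k z -> exists n, (n <= k)%nat /\ brillouin Gb n (f z).
Proof.
  intros HA HB fdisk fcont f0 Hf k z [Hz Hk].
  assert (S1 : forall s, 0 <= s <= 1 -> forall x, Qs Ga (ray z s) x -> Es Ga z x).
  { intros s Hs x [HL Hq]. split; auto.
    assert (Hx : disk x) by (apply (Lambda_disk Ga); auto).
    destruct (sq_ge0 x) as [Hp|Hp].
    - apply hd_le; auto. apply hd_eq in Hq; auto using ray_disk.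
      eapply far_side; eauto.
    - symmetry in Hp. apply sq0 in Hp. subst. lra. }
  assert (S2 : forall s, exists g : C -> C, 0 <= s <= 1 ->
     (forall x, (Qs Gb (f (ray z s)) x /\ x <> RtoC 0) -> (Qs Ga (ray z s) (g x) /\ g x <> RtoC 0)) /\
     (forall x y, (Qs Gb (f (ray z s)) x /\ x <> RtoC 0) -> (Qs Gb (f (ray z s)) y /\ y <> RtoC 0) ->
        g x = g y -> x = y)).
  { intros s. destruct (classic (0 <= s <= 1)) as [Hs|Hs]; [|exists (fun x => x); tauto].
    destruct (inj_card (Qs Ga (ray z s)) (Es Ga z) (fun x => x) k Hk) as [i [Hik Hi]].
    { apply S1; auto. } { auto. }
    assert (Q0a : Qs Ga (ray z s) (RtoC 0)) by (split; auto using Lambda0).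
    assert (Hi1 : (1 <= i)%nat).
    { destruct i; [|lia]. exfalso. eapply card0; eauto. }
    assert (Hfb : focal Gb i (f (ray z s))).
    { apply Hf; auto. split; auto using ray_disk. }
    destruct Hfb as [_ Hib].
    assert (Q0b : Qs Gb (f (ray z s)) (RtoC 0)) by (split; auto using Lambda0).
    destruct (card_remove _ _ _ Hi Q0a) as [lB [NB [LB HlB]]].
    destruct (card_remove _ _ _ Hib Q0b) as [lA [NA [LA HlA]]].
    destruct (inj_exists lA lB NB) as [g [Hg1 Hg2]]. lia.
    exists g. intros _. split.
    - intros x Hx. apply HlB. apply Hg1. apply HlA. auto.
    - intros x y Hx Hy. apply Hg2; apply HlA; auto. }
  assert (S3 : forall mu, exists s, (Es Gb (f z) mu /\ mu <> RtoC 0) ->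
     0 <= s <= 1 /\ Qs Gb (f (ray z s)) mu).
  { intros mu. destruct (classic (Es Gb (f z) mu /\ mu <> RtoC 0)) as [[[HL Hle] Hne]|Hn];
      [|exists 0; tauto].
    assert (Hmu : disk mu) by (apply (Lambda_disk Gb); auto).
    pose proof (sq_pos mu Hne) as Hp.
    destruct (path_hit f fcont z Hz mu) as [s [Hs Hq]].
    { rewrite ray0, ray1, f0. apply hd_le in Hle; auto.
      assert (qf mu (RtoC 0) = sq mu) by (unfold qf, sq, RtoC; cbn [fst snd]; ring).
      rewrite H. nra. }
    exists s. intros _. split; auto. split; auto. apply hd_eq; auto using ray_disk. }
  destruct (choiceT _ _ _ S2) as [B HBs].
  destruct (choiceT _ _ _ S3) as [T HTs].
  set (F := fun mu => if excluded_middle_informative (mu = RtoC 0) then RtoC 0 else B (T mu) mu).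
  destruct (inj_card (Es Gb (f z)) (Es Ga z) F k Hk) as [n [Hn Hc]].
  - intros mu Hmu. unfold F. destruct (excluded_middle_informative (mu = RtoC 0)) as [E|E].
    + split; auto using Lambda0. lra.
    + destruct (HTs mu (conj Hmu E)) as [Hs Hq].
      destruct (HBs (T mu) Hs) as [Hm _].
      apply (S1 (T mu) Hs). apply Hm. auto.
  - intros mu nu Hmu Hnu. unfold F.
    destruct (excluded_middle_informative (mu = RtoC 0)) as [E1|E1];
    destruct (excluded_middle_informative (nu = RtoC 0)) as [E2|E2]; intros E.
    + congruence.
    + exfalso. destruct (HTs nu (conj Hnu E2)) as [Hs Hq].
      destruct (HBs (T nu) Hs) as [Hm _]. destruct (Hm nu (conj Hq E2)). auto.
    + exfalso. destruct (HTs mu (conj Hmu E1)) as [Hs Hq].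
      destruct (HBs (T mu) Hs) as [Hm _]. destruct (Hm mu (conj Hq E1)). auto.
    + destruct (HTs mu (conj Hmu E1)) as [Hs1 Hq1].
      destruct (HTs nu (conj Hnu E2)) as [Hs2 Hq2].
      destruct (HBs (T mu) Hs1) as [Hm1 Hi1].
      destruct (HBs (T nu) Hs2) as [Hm2 Hi2].
      destruct (Hm1 mu (conj Hq1 E1)) as [[HLl Hql] Hl0].
      destruct (Hm2 nu (conj Hq2 E2)) as [[_ Hql2] _].
      assert (Hdl : disk (B (T mu) mu)) by (apply (Lambda_disk Ga); auto).
      assert (ET : T mu = T nu).
      { apply (ray_unique (B (T mu) mu) z); auto using sq_pos.
        - apply hd_eq; auto using ray_disk.
        - rewrite E. apply hd_eq; auto using ray_disk. rewrite <- E. auto. }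
      rewrite <- ET in E, Hq2. apply Hi1; auto.
  - exists n. split; auto. split; auto.
Qed.

Theorem lemma6 (G1 G2 : (C -> C) -> Prop) (phi : C -> C) :
  cocompact_torsion_free_fuchsian G1 ->
  cocompact_torsion_free_fuchsian G2 ->
  quotients_homeomorphic G1 G2 ->
  disk_homeo phi ->
  phi (RtoC 0) = RtoC 0 ->
  (forall i : nat, (1 <= i)%nat -> image_eq phi (focal G1 i) (focal G2 i)) ->
  forall k : nat, image_eq phi (brillouin G1 k) (brillouin G2 k).
Proof.
  intros [[HA1 _] _] [[HA2 _] _] _ [Hpd [Hpc [psi [Hsd [Hsc [Hpsi1 Hpsi2]]]]]] Hp0 Hfoc.
  assert (Hs0 : psi (RtoC 0) = RtoC 0).
  { rewrite <- Hp0 at 1. apply Hpsi1, disk0. }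
  assert (Tphi : forall i x, (1 <= i)%nat -> focal G1 i x -> focal G2 i (phi x)).
  { intros i x Hi Hx. apply (Hfoc i Hi). eauto. }
  assert (Tpsi : forall i y, (1 <= i)%nat -> focal G2 i y -> focal G1 i (psi y)).
  { intros i y Hi Hy. apply (Hfoc i Hi) in Hy. destruct Hy as [x [Hx <-]].
    rewrite Hpsi1; auto. destruct Hx; auto. }
  intros k w. split.
  - intros Hw.
    destruct (main_lemma G2 G1 psi HA2 HA1 Hsd Hsc Hs0 Tpsi k w Hw) as [n [Hn Hb]].
    destruct (main_lemma G1 G2 phi HA1 HA2 Hpd Hpc Hp0 Tphi n _ Hb) as [m [Hm Hb2]].
    rewrite Hpsi2 in Hb2 by (destruct Hw; auto).
    assert (m = k) by (eapply card_unique; [apply Hb2|apply Hw]).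
    exists (psi w). split; [|apply Hpsi2; destruct Hw; auto].
    replace k with n by lia. auto.
  - intros [z [Hz <-]].
    destruct (main_lemma G1 G2 phi HA1 HA2 Hpd Hpc Hp0 Tphi k z Hz) as [n [Hn Hb]].
    destruct (main_lemma G2 G1 psi HA2 HA1 Hsd Hsc Hs0 Tpsi n _ Hb) as [m [Hm Hb2]].
    rewrite Hpsi1 in Hb2 by (destruct Hz; auto).
    assert (m = k) by (eapply card_unique; [apply Hb2|apply Hz]).
    replace k with n by lia. auto.
Qed.
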